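(* Let $c\ge 2$ and let $G$ be a $c$-edge-colored graph. Then $G$ is PC acyclic of type 3 if and only if $G$ has no PC closed walk.
   Context: A $c$-edge-colored graph is a finite undirected graph in which every edge is assigned a color from $\{1,\dots,c\}$. A walk $W=v_1e_1v_2\dots v_{p-1}e_{p-1}v_p$ is closed if $v_1=v_p$. A walk is properly colored (PC) if $e_i$ and $e_{i+1}$ have different colors for every $i\in\{1,\dots,p-2\}$ and, if the walk is closed, $e_{p-1}$ and $e_1$ also have different colors. An ordering $v_1,\dots,v_n$ of $V(G)$ is of type 3 if for every $i\in[n]$, all edges from $v_i$ to $\{v_{i+1},\dots,v_n\}$ have the same color. $G$ is PC acyclic of type 3 if it has an ordering of its vertices of type 3. *)

(* Defs.v *)
From mathcomp Require Import all_boot.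
Set Implicit Arguments. Unset Strict Implicit. Unset Printing Implicit Defensive.

(* A c-edge-colored (finite, simple, undirected) graph on the vertex type T:
   adj is symmetric and irreflexive; col x y is the colour of the edge xy
   (colours are 'I_c, i.e. {0,..,c-1} standing for {1,..,c}); col must be
   symmetric on edges, its values on non-edges are irrelevant. *)
Definition edge_colored_graph (T : finType) (c : nat)
    (adj : rel T) (col : T -> T -> 'I_c) : Prop :=
  [/\ symmetric adj, irreflexive adj &
      forall x y, adj x y -> col x y = col y x].

(* A walk v0 e1 v1 ... is given by its vertex sequence v0 :: s
   (in a simple graph edges are determined by consecutive vertices). *)
Definition walk (T : finType) (adj : rel T) (v0 : T) (s : seq T) : bool :=
  path adj v0 s.

Definition closed_walk (T : finType) (adj : rel T) (v0 : T) (s : seq T) : bool :=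
  [&& walk adj v0 s, s != [::] & last v0 s == v0].

Definition walk_colors (T : finType) (c : nat) (col : T -> T -> 'I_c)
    (v0 : T) (s : seq T) : seq 'I_c := pairmap col v0 s.

Definition PC_closed_walk (T : finType) (c : nat) (adj : rel T)
    (col : T -> T -> 'I_c) (v0 : T) (s : seq T) : Prop :=
  closed_walk adj v0 s /\
  let cs := walk_colors col v0 s in
  (forall (i : nat) (d : 'I_c), i.+1 < size cs -> nth d cs i != nth d cs i.+1) /\
  (forall d : 'I_c, last d cs != head d cs).

Definition type3_ordering (T : finType) (c : nat) (adj : rel T)
    (col : T -> T -> 'I_c) (ord : seq T) : Prop :=
  [/\ uniq ord, (forall x, x \in ord) &
      forall (x0 : T) (i j k : nat), i < j -> i < k -> j < size ord -> k < size ord ->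
        adj (nth x0 ord i) (nth x0 ord j) -> adj (nth x0 ord i) (nth x0 ord k) ->
        col (nth x0 ord i) (nth x0 ord j) = col (nth x0 ord i) (nth x0 ord k)].

Definition PC_acyclic_type3 (T : finType) (c : nat) (adj : rel T)
    (col : T -> T -> 'I_c) : Prop :=
  exists ord : seq T, type3_ordering adj col ord.

(* Main.v *)
Require Import Defs.
From mathcomp Require Import all_boot.
From mathcomp Require Import zify.

Lemma exists_mono (c : nat) (T : finType) (adj : rel T) (col : T -> T -> 'I_c)
  (S : {set T}) :
  edge_colored_graph adj col ->
  ~ (exists (v0 : T) (s : seq T), PC_closed_walk adj col v0 s) ->
  forall x, x \in S -> exists2 v, v \in S &
    forall y z, y \in S -> z \in S -> adj v y -> adj v z -> col v y = col v z.
Proof.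
move=> [asym airr csym] noPC x xS.
case: (boolP [exists v in S, [forall y in S, [forall z in S,
   adj v y ==> adj v z ==> (col v y == col v z)]]]).
  move/existsP=> [v /andP[vS /forallP Hv]]; exists v => // y z yS zS ay az.
  by move: (Hv y); rewrite yS /= => /forallP /(_ z); rewrite zS ay az /= => /eqP.
move=> Hn; exfalso; apply: noPC.
have H : forall v, v \in S -> exists y z,
    [/\ y \in S, z \in S, adj v y, adj v z & col v y != col v z].
  move=> v vS.
  have : ~~ [forall y in S, [forall z in S,
     adj v y ==> adj v z ==> (col v y == col v z)]].
    by apply: contra Hn => Hf; apply/existsP; exists v; rewrite vS.
  move/forallPn=> [y]; rewrite negb_imply => /andP[yS /forallPn [z]].
  rewrite negb_imply => /andP[zS]; rewrite negb_imply => /andP[ay].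
  rewrite negb_imply => /andP[az ne]; by exists y, z.
pose good (p : T * T) := [&& p.1 \in S, p.2 \in S & adj p.1 p.2].
pose P (p : T * T) w := [&& w \in S, adj p.2 w & col p.2 w != col p.2 p.1].
have [f fP] : exists f : T * T -> T * T, forall p, good p ->
    [/\ good (f p), (f p).1 = p.2 & col (f p).1 (f p).2 != col p.1 p.2].
  exists (fun p => if [pick w | P p w] is Some w then (p.2, w) else p).
  move=> [u v] /and3P[/= uS vS auv].
  case: pickP => [w Pw|noP].
    move: Pw => /and3P[/= wS avw ne]; split => //=.
      by rewrite /good /= vS wS avw.
    by rewrite (csym u v auv).
  exfalso; have [y [z [yS zS ay az neyz]]] := H v vS.
  case: (eqVneq (col v y) (col v u)) => [e|ne].
    by move: (noP z); rewrite /P /= zS az -e eq_sym neyz.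
  by move: (noP y); rewrite /P /= yS ay ne.
have gI : forall n p, good p -> good (iter n f p).
  by elim=> [|n IH] p gp //=; case: (fP _ (IH p gp)).
have [y [z [yS _ axy _ _]]] := H x xS.
pose p0 := (x, y).
have gp0 : good p0 by rewrite /good /= xS yS axy.
pose N := #|{: T * T}|.+1.
pose sq := mkseq (fun n => iter n f p0) N.
have nu : ~~ uniq sq.
  apply/negP => /card_uniqP; rewrite size_mkseq => cq.
  by have := max_card (mem sq); rewrite cq /N ltnn.
have [i [j [ij jN]]] := elimT (uniqPn p0) nu.
rewrite /sq size_mkseq in jN; rewrite !nth_mkseq ?(ltn_trans ij) // => eij.
pose q := iter i f p0; pose k := j - i.
have k0 : 0 < k by rewrite /k subn_gt0.
have stk : iter k f q = q by rewrite /q -iterD /k subnK ?(ltnW ij) // eij.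
have gq : good q by apply: gI.
have gs : forall m, good (iter m f q) by move=> m; apply: gI.
have s1 : forall m, (iter m.+1 f q).1 = (iter m f q).2.
  by move=> m; case: (fP _ (gs m)).
have sc : forall m, col (iter m.+1 f q).1 (iter m.+1 f q).2
                   != col (iter m f q).1 (iter m f q).2.
  by move=> m; case: (fP _ (gs m)) => _ _ h; exact: h.
pose v0 := q.1; pose s := mkseq (fun m => (iter m f q).2) k.
have nthvs : forall m, m <= k -> nth v0 (v0 :: s) m = (iter m f q).1.
  by case=> [|m] //= Hm; rewrite nth_mkseq // s1.
have ncs : forall m d, m < k ->
    nth d (walk_colors col v0 s) m = col (iter m f q).1 (iter m f q).2.
  move=> m d Hm; rewrite /walk_colors (nth_pairmap v0); last by rewrite size_mkseq.
  by rewrite (nthvs _ (ltnW Hm)) nth_mkseq.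
exists v0, s; split.
  apply/and3P; split.
  - apply/(pathP v0) => m; rewrite size_mkseq => Hm.
    rewrite (nthvs _ (ltnW Hm)) nth_mkseq //.
    by case/and3P: (gs m).
  - by rewrite -size_eq0 size_mkseq -lt0n.
  - by rewrite (last_nth v0) size_mkseq nthvs // stk.
split.
  move=> m d; rewrite size_pairmap size_mkseq => Hm.
  by rewrite (ncs _ _ Hm) (ncs _ _ (ltn_trans (ltnSn m) Hm)) eq_sym sc.
move=> d; rewrite -nth0 -nth_last size_pairmap size_mkseq !ncs ?prednK //.
by have := sc k.-1; rewrite prednK // stk /= eq_sym.
Qed.

Lemma order_exists (c : nat) (T : finType) (adj : rel T) (col : T -> T -> 'I_c) :
  edge_colored_graph adj col ->
  ~ (exists (v0 : T) (s : seq T), PC_closed_walk adj col v0 s) ->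
  forall n (S : {set T}), #|S| = n -> exists ord : seq T,
    [/\ uniq ord, forall x, (x \in ord) = (x \in S) &
      forall (x0 : T) (i j k : nat), i < j -> i < k -> j < size ord -> k < size ord ->
        adj (nth x0 ord i) (nth x0 ord j) -> adj (nth x0 ord i) (nth x0 ord k) ->
        col (nth x0 ord i) (nth x0 ord j) = col (nth x0 ord i) (nth x0 ord k)].
Proof.
move=> HG noPC; elim=> [|n IH] S cS.
  exists [::]; split => //.
  by move=> x; rewrite (card0_eq cS).
have [x xS] : exists x, x \in S.
  by apply/set0Pn; apply/eqP => S0; rewrite S0 cards0 in cS.
have [v vS Hv] := @exists_mono c T adj col S HG noPC x xS.
have cS' : #|S :\ v| = n by move: cS; rewrite (cardsD1 v) vS add1n => -[].
have [ord [u mem cond]] := IH _ cS'.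
have inS : forall y, y \in ord -> y \in S by move=> y; rewrite mem => /setD1P[].
exists (v :: ord); split.
- by rewrite /= u andbT mem !inE eqxx.
- move=> y; rewrite inE mem !inE.
  by case: (eqVneq y v) => [->|].
- move=> x0 [|i] [|j] [|k] //= ij ik js ks a1 a2.
    by apply: Hv => //; apply: inS; apply: mem_nth.
  by apply: cond.
Qed.

Lemma noPC_of_order (c : nat) (T : finType) (adj : rel T) (col : T -> T -> 'I_c)
  (ord : seq T) :
  edge_colored_graph adj col -> type3_ordering adj col ord ->
  ~ (exists (v0 : T) (s : seq T), PC_closed_walk adj col v0 s).
Proof.
move=> [asym airr csym] [u all cond] [v0 [s [/and3P[w sn lst] [cc lh]]]].
have n0 : 0 < size s by rewrite lt0n size_eq0.
pose n := size s.
have exP : exists p, has (fun t => index (nth v0 s t) ord == p) (iota 0 n).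
  exists (index (nth v0 s 0) ord); apply/hasP; exists 0 => //.
  by rewrite mem_iota.
case: (ex_minnP exP) => p /hasP[t tI /eqP pt] pmin.
rewrite mem_iota /= in tI.
pose u0 := nth v0 s t.
have umin : forall t', t' < n -> index u0 ord <= index (nth v0 s t') ord.
  move=> t' Ht'; rewrite pt; apply: pmin; apply/hasP; exists t' => //.
  by rewrite mem_iota.
have vert : forall m, m <= n -> exists2 t', t' < n & nth v0 (v0 :: s) m = nth v0 s t'.
  case=> [|m] Hm /=; last by exists m.
  exists n.-1; first by rewrite prednK.
  by rewrite nth_last (eqP lst).
have nb : forall a, (exists2 t', t' < n & a = nth v0 s t') -> a != u0 ->
    index u0 ord < index a ord.
  move=> a [t' Ht' ->] ne; rewrite ltn_neqAle umin // andbT.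
  apply: contra ne => /eqP e.
  by rewrite -(nth_index v0 (all (nth v0 s t'))) -e nth_index.
have key : forall a b, (exists2 t', t' < n & a = nth v0 s t') ->
    (exists2 t', t' < n & b = nth v0 s t') ->
    adj a u0 -> adj u0 b -> col a u0 = col u0 b.
  move=> a b Ha Hb aa ab.
  have ane : a != u0 by apply: contraTneq aa => ->; rewrite airr.
  have bne : b != u0 by apply: contraTneq ab => ->; rewrite airr.
  rewrite (csym _ _ aa).
  have := cond v0 (index u0 ord) (index a ord) (index b ord) (nb _ Ha ane) (nb _ Hb bne).
  rewrite !index_mem !all !nth_index //.
  by apply => //; rewrite asym.
have ncs : forall m d, m < n ->
    nth d (walk_colors col v0 s) m = col (nth v0 (v0 :: s) m) (nth v0 s m).
  by move=> m d Hm; rewrite /walk_colors (nth_pairmap v0).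
have adjm : forall m, m < n -> adj (nth v0 (v0 :: s) m) (nth v0 s m).
  by move=> m Hm; apply: (pathP v0 w).
pose d : 'I_c := col v0 v0.
case: (ltnP t.+1 n) => Ht.
  have := cc t d; rewrite size_pairmap => /(_ Ht).
  rewrite (ncs _ _ tI) (ncs _ _ Ht) /= -/u0.
  have [t1 Ht1 e1] := vert t (ltnW (ltn_trans (ltnSn t) Ht)).
  rewrite (key (nth v0 (v0 :: s) t) (nth v0 s t.+1)) ?eqxx //.
  - by exists t1.
  - by exists t.+1.
  - by have := adjm t tI.
  - by have := adjm t.+1 Ht.
have tn : t = n.-1 by move: tI Ht n0; rewrite -/n; lia.
have u0v : u0 = v0 by rewrite /u0 tn nth_last (eqP lst).
have := lh d; rewrite -nth0 -nth_last size_pairmap !ncs ?prednK // ?ltnSn //.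
rewrite -/n -tn -/u0 /=.
have [t1 Ht1 e1] := vert t (ltnW tI).
rewrite (key (nth v0 (v0 :: s) t) (nth v0 s 0)); first by rewrite u0v eqxx.
- by exists t1.
- by exists 0.
- exact: (adjm t tI).
- by rewrite u0v; have := adjm 0 n0.
Qed.

Theorem mainTheorem4 (c : nat) (T : finType) (adj : rel T) (col : T -> T -> 'I_c) :
  2 <= c -> edge_colored_graph adj col ->
  PC_acyclic_type3 adj col <->
  ~ (exists (v0 : T) (s : seq T), PC_closed_walk adj col v0 s).
Proof.
move=> _ HG; split.
  by move=> [ord Hord]; apply: noPC_of_order HG Hord.
move=> noPC.
have [ord [u mem cond]] := @order_exists c T adj col HG noPC _ _ (erefl #|[set: T]|).
exists ord; split => // x; by rewrite mem inE.
Qed.
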